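(* Let $G$ be a graph and $uv$ an edge of $G$. If $G$ admits a tree 3-spanner with 5-center $u,v$, then $G$ admits a $uv$-concentrated tree 3-spanner.
   Context: Graphs are finite, simple and loopless. A tree 3-spanner of $G$ is a spanning subgraph $T$ of $G$ that is a tree and satisfies $d_T(a,b)\le 3\,d_G(a,b)$ for all vertices $a,b$ of $G$. A 5-center of a tree $T$ is a pair of vertices $u,v$ that are adjacent in $T$ and such that every vertex of $T$ is within $T$-distance 2 of $u$ or of $v$. A tree 3-spanner $T$ of $G$ is $uv$-concentrated if all three of the following hold: (1) $u,v$ is a 5-center of $T$; (2) every $G$-neighbour $w$ of $u$ with $d_T(w,u)<d_T(w,v)$ is a $T$-neighbour of $u$; (3) every $G$-neighbour $w$ of $v$ with $d_T(w,v)<d_T(w,u)$ is a $T$-neighbour of $v$. *)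

(* Defs.v *)
From mathcomp Require Import all_boot.
Set Implicit Arguments. Unset Strict Implicit. Unset Printing Implicit Defensive.

Section Graphs.
Variable T : finType.

Definition simple_graph (e : rel T) : Prop := symmetric e /\ irreflexive e.

Fixpoint reach (e : rel T) (k : nat) (a b : T) : bool :=
  match k with
  | 0 => a == b
  | k'.+1 => reach e k' a b || [exists c, e a c && reach e k' c b]
  end.

(* graph distance: least k with a walk of length <= k; if b is unreachable
   from a the value is #|T| (never used in connected graphs) *)
Definition dist (e : rel T) (a b : T) : nat :=
  find (fun k => reach e k a b) (iota 0 #|T|).

(* spanning subgraph t of e that is a tree: connected, and with no
   simple cycle (of length >= 3) *)
Definition is_spanning_tree (e t : rel T) : Prop :=
  simple_graph t /\ subrel t e /\
  (forall a b, connect t a b) /\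
  (forall c : seq T, ucycle t c -> size c <= 2).

Definition tree_3_spanner (e t : rel T) : Prop :=
  is_spanning_tree e t /\ forall a b, dist t a b <= 3 * dist e a b.

Definition five_center (t : rel T) (u v : T) : Prop :=
  t u v /\ forall x, (dist t x u <= 2) || (dist t x v <= 2).

Definition concentrated (e t : rel T) (u v : T) : Prop :=
  tree_3_spanner e t /\ five_center t u v /\
  (forall w, e u w -> dist t w u < dist t w v -> t u w) /\
  (forall w, e v w -> dist t w v < dist t w u -> t v w).

End Graphs.

(* Main.v *)
Require Import Defs.
From mathcomp Require Import all_boot zify.
Set Implicit Arguments. Unset Strict Implicit. Unset Printing Implicit Defensive.

Section Gen.
Variable T : finType.
Implicit Types (r : rel T) (a b c : T).

Lemma reachSE r k a b : reach r k.+1 a b = reach r k a b || [exists c, r a c && reach r k c b].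
Proof. by []. Qed.

Lemma reachS r k a b : reach r k a b -> reach r k.+1 a b.
Proof. by move=> H /=; rewrite H. Qed.

Lemma reach_mono r k m a b : k <= m -> reach r k a b -> reach r m a b.
Proof.
move=> /subnK <-; elim: (m - k) => [|n IH] //= H.
by rewrite IH.
Qed.

Lemma reach0 r a : reach r 0 a a.
Proof. by rewrite /= eqxx. Qed.

Lemma reach_edge r a b : r a b -> reach r 1 a b.
Proof. by move=> H /=; apply/orP; right; apply/existsP; exists b; rewrite H /= eqxx. Qed.

Lemma reach_cat r i j a b c : reach r i a b -> reach r j b c -> reach r (i + j) a c.
Proof.
elim: i a => [|i IH] a /=.
  by move=> /eqP ->.
case/orP=> [H1 H2|/existsP [d /andP [Had Hd]] H2].
  by apply: reachS; apply: IH.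
apply/orP; right; apply/existsP; exists d.
by rewrite Had (IH _ Hd H2).
Qed.

Lemma reach_sym r k a b : symmetric r -> reach r k a b -> reach r k b a.
Proof.
move=> sr; elim: k a => [|k IH] a /=.
  by rewrite eq_sym.
case/orP=> [H|/existsP [d /andP [Had Hd]]].
  by rewrite IH.
have := reach_cat (IH _ Hd) (reach_edge (r:=r) (a:=d) (b:=a) _).
by rewrite addn1; apply; rewrite sr.
Qed.

Lemma reach_eq r1 r2 k a b : r1 =2 r2 -> reach r1 k a b = reach r2 k a b.
Proof.
move=> E; elim: k a => [|k IH] a //=.
rewrite IH; congr (_ || _); apply: eq_existsb => d.
by rewrite E IH.
Qed.

Lemma path_reach r a p : path r a p -> reach r (size p) a (last a p).
Proof.
elim: p a => [|y p IH] a /=.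
  by rewrite eqxx.
case/andP=> Hay Hp; apply/orP; right; apply/existsP; exists y.
by rewrite Hay IH.
Qed.

Lemma dist_le r a b j : reach r j a b -> dist r a b <= j.
Proof.
move=> H; rewrite /dist.
case: (ltnP j #|T|) => Hj.
  rewrite leqNgt; apply/negP => Hlt.
  have := before_find 0 Hlt; rewrite nth_iota // add0n H //.
apply: leq_trans Hj; apply: leq_trans (find_size _ _) _.
by rewrite size_iota.
Qed.

Lemma dist_reach r a b : connect r a b -> reach r (dist r a b) a b.
Proof.
case/connectP=> p Hp ->.
case: (shortenP Hp) => p' Hp' Hu _.
have Hr := path_reach Hp'.
have Hs : size p' < #|T|.
  have := max_card (mem (a :: p')).
  by move/card_uniqP: Hu => -> /=.
have Hh : has (fun k => reach r k a (last a p')) (iota 0 #|T|).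
  by apply/hasP; exists (size p'); rewrite ?mem_iota //.
have Hf : find (fun k => reach r k a (last a p')) (iota 0 #|T|) < #|T|.
  by move: Hh; rewrite has_find size_iota.
by have := nth_find 0 Hh; rewrite nth_iota // add0n.
Qed.

Lemma dist_reach_iff r a b j : connect r a b -> (dist r a b <= j) = reach r j a b.
Proof.
move=> C; apply/idP/idP; last exact: dist_le.
by move=> H; apply: reach_mono H (dist_reach C).
Qed.


Lemma acyc_parent r (Q : T -> T) (rk : T -> nat) root :
  (forall x y, r x y -> (x != root) && (y == Q x) || (y != root) && (x == Q y)) ->
  (forall x, x != root -> rk (Q x) < rk x) ->
  forall (cs : seq T), ucycle r cs -> size cs <= 2.
Proof.
move=> Hr Hrk cs; rewrite /ucycle => /andP [Hc Hu].
rewrite leqNgt; apply/negP => Hsz.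
case: cs Hc Hu Hsz => [//|z0 c0] Hc Hu Hsz.
set cs := z0 :: c0 in Hc Hu Hsz.
have Hz0 : z0 \in cs by rewrite inE eqxx.
case: (arg_maxnP rk Hz0) => z Hzc Hmax.
case: (rot_to Hzc) => i s Hrot.
have := Hc; rewrite -(rot_cycle i) Hrot => Hc'.
have := Hu; rewrite -(rot_uniq i) Hrot => Hu'.
have Hs : size s >= 2 by move: Hsz; rewrite -(size_rot i cs) Hrot.
have Hsub : forall y, y \in s -> rk y <= rk z.
  move=> y Hy; apply: Hmax; change (y \in cs); by rewrite -(mem_rot i) Hrot inE Hy orbT.
have nb : forall y, y \in s -> r z y || r y z -> y = Q z.
  move=> y Hy /orP [] /Hr /orP [] /andP [H1 /eqP H2] //.
  - by have := Hrk _ H1; rewrite -H2 ltnNge Hsub.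
  - by have := Hrk _ H1; rewrite -H2 ltnNge Hsub.
clear Hrot Hc Hu; case: s Hc' Hu' Hs Hsub nb => [//|y1 [//|y2 s']] Hc' Hu' Hs Hsub nb.
move: Hc'; rewrite /= => /andP [Hzy1].
case/andP => _; rewrite rcons_path => /andP [_ Hlast].
have E1 := nb y1 (mem_head _ _) (introT orP (or_introl Hzy1)).
have Hlin : last y2 s' \in y1 :: y2 :: s' by rewrite inE mem_last orbT.
have E2 := nb _ Hlin (introT orP (or_intror Hlast)).
move: Hu'; rewrite /= => /and3P [_ Hn _].
by move: Hn; rewrite -E2 in E1; rewrite E1 mem_last.
Qed.

End Gen.

Section Tree.
Variable T : finType.
Variables (t : rel T) (u : T).
Hypothesis tsym : symmetric t.
Hypothesis tirr : irreflexive t.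
Hypothesis tconn : forall a b, connect t a b.
Hypothesis tacyc : forall c : seq T, ucycle t c -> size c <= 2.

Definition lev x := dist t x u.
Definition par x := odflt x [pick y | t x y && (lev y == (lev x).-1)].

Lemma lev_reach x j : (lev x <= j) = reach t j x u.
Proof. exact: dist_reach_iff. Qed.

Lemma lev0 x : (lev x == 0) = (x == u).
Proof. by rewrite -leqn0 lev_reach. Qed.

Lemma lev_u : lev u = 0.
Proof. by apply/eqP; rewrite lev0. Qed.

Lemma lev_edge x y : t x y -> lev x <= (lev y).+1.
Proof.
move=> Hxy; rewrite lev_reach -addn1 addnC.
apply: reach_cat (reach_edge Hxy) _; by rewrite -lev_reach.
Qed.

Lemma par_spec x : x != u -> t x (par x) /\ lev x = (lev (par x)).+1.
Proof.
move=> Hx.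
have [c /andP [Hxc Hc]] : exists c, t x c && (lev c == (lev x).-1).
  case E : (lev x) => [|n].
    by move/eqP: E; rewrite lev0 (negbTE Hx).
  have : reach t n.+1 x u by move: (lev_reach x n.+1); rewrite E leqnn => <-.
  rewrite reachSE => /orP [H|/existsP [c /andP [Hxc Hc]]].
    by move: H; rewrite -lev_reach E ltnn.
  exists c; rewrite Hxc /=; rewrite -lev_reach in Hc.
  have := lev_edge Hxc; rewrite E eqn_leq Hc /=; lia.
rewrite /par; case: pickP => [y /andP [Hy /eqP Hly]|/(_ c)]; last by rewrite Hxc Hc.
split=> //; rewrite Hly prednK // lt0n lev0 //.
Qed.

Lemma par_u : par u = u.
Proof.
rewrite /par; case: pickP => [y /andP [Hy /eqP Hly]|] //=.
move: Hly; rewrite lev_u /= => /eqP; rewrite lev0 => /eqP Eu.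
by move: Hy; rewrite Eu tirr.
Qed.

Lemma lev_par x : lev (par x) = (lev x).-1.
Proof.
case: (eqVneq x u) => [->|Hx]; first by rewrite par_u lev_u.
by case: (par_spec Hx) => _ ->.
Qed.

Lemma BP k p q : lev p = k -> lev q = k -> p != q ->
  exists s, [/\ path t p s, last p s = q, uniq (p :: s), 2 <= size s &
                all (fun z => lev z <= k) s].
Proof.
elim: k p q => [|k IH] p q Hp Hq Hpq.
  move/eqP: Hp; rewrite lev0 => /eqP Ep; move/eqP: Hq; rewrite lev0 => /eqP Eq.
  by move: Hpq; rewrite Ep Eq eqxx.
have pu : p != u by rewrite -lev0 Hp.
have qu : q != u by rewrite -lev0 Hq.
case: (par_spec pu) => tp lp; case: (par_spec qu) => tq lq.
have lp' : lev (par p) = k by move: lp; rewrite Hp => -[].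
have lq' : lev (par q) = k by move: lq; rewrite Hq => -[].
have Hne : forall z, lev z <= k -> (z == p) = false /\ (z == q) = false.
  by move=> z Hz; split; apply/eqP => E; move: Hz; rewrite E ?Hp ?Hq ltnn.
case: (eqVneq (par p) (par q)) => Em.
  exists [:: par p; q]; split => //=.
  - by rewrite tp Em tsym tq.
  - rewrite !inE negb_or Hpq andbT (eq_sym p) (Hne _ (eq_leq lp')).1 /=.
    by rewrite (Hne _ (eq_leq lp')).2.
  - by rewrite lp' Hq leqnSn leqnn.
have [s [Hs Hl Hu Hsz Ha]] := IH _ _ lp' lq' Em.
exists (par p :: rcons s q); split.
- by rewrite /= tp rcons_path Hs Hl tsym tq.
- by rewrite /= last_rcons.
- have Hnin : forall z, z \in par p :: s -> lev z <= k.
    by move=> z; rewrite inE => /orP [/eqP ->|/(allP Ha)] //; rewrite lp'.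
  rewrite cons_uniq -rcons_cons rcons_uniq Hu andbT mem_rcons inE negb_or Hpq /=.
  by apply/andP; split; apply/negP => /Hnin; rewrite ?Hp ?Hq ltnn.
- by rewrite /= size_rcons; apply: leq_trans Hsz _; rewrite leqW.
- rewrite /= lp' leqnSn /= all_rcons Hq leqnn /=.
  by apply/allP => z /(allP Ha) Hz; apply: leq_trans Hz _.
Qed.

Lemma factC x y : t x y -> lev x = lev y -> False.
Proof.
move=> Hxy E.
have Hne : x != y by apply/eqP => E'; move: Hxy; rewrite E' tirr.
have [s [Hs Hl Hu Hsz _]] := BP E erefl Hne.
have Hc : ucycle t (x :: s) by rewrite /ucycle Hu andbT /= rcons_path Hs Hl tsym Hxy.
by have := tacyc Hc => /= H; lia.
Qed.

Lemma factB y p q : t y p -> t y q -> p != q -> lev p = lev q ->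
  lev y = (lev p).+1 -> False.
Proof.
move=> Hp Hq Hpq E Ey.
have [s [Hs Hl Hu Hsz Ha]] := BP erefl (esym E) Hpq.
have Hy : y \notin p :: s.
  rewrite inE negb_or; apply/andP; split.
    by apply/eqP => E'; move: Ey; rewrite E'; lia.
  by apply/negP => /(allP Ha); rewrite Ey ltnn.
have Hc : ucycle t (y :: p :: s).
  by rewrite /ucycle (cons_uniq y) Hy Hu andbT /= Hp rcons_path Hs Hl tsym Hq.
by have := tacyc Hc => /= H; lia.
Qed.

Lemma factA x y : t x y -> (x != u) && (y == par x) || (y != u) && (x == par y).
Proof.
move=> Hxy.
have h1 := lev_edge Hxy.
have h2 : lev y <= (lev x).+1 by apply: lev_edge; rewrite tsym.
case: (ltngtP (lev x) (lev y)) => Hl; last first.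
- by case: (factC Hxy Hl).
- have xu : x != u by rewrite -lev0 -lt0n; apply: leq_ltn_trans Hl.
  case: (par_spec xu) => tp lp.
  case: (eqVneq y (par x)) => [->|Hne]; first by rewrite xu.
  have Hne' : par x != y by rewrite eq_sym.
  case: (factB tp Hxy Hne'); lia.
- have yu : y != u by rewrite -lev0 -lt0n; apply: leq_ltn_trans Hl.
  case: (par_spec yu) => tp lp.
  case: (eqVneq x (par y)) => [->|Hne]; first by rewrite yu orbT.
  have Hne' : par y != x by rewrite eq_sym.
  rewrite tsym in Hxy.
  case: (factB tp Hxy Hne'); lia.
Qed.

Definition tP x y := (x != u) && (y == par x) || (y != u) && (x == par y).

Lemma t_tP : t =2 tP.
Proof.
move=> x y; apply/idP/idP; first exact: factA.
case/orP=> /andP [Hu /eqP ->]; first by case: (par_spec Hu).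
by rewrite tsym; case: (par_spec Hu).
Qed.


Lemma walk k a b : reach t k a b -> exists i j, [/\ i + j <= k,
  iter i par a = iter j par b, lev a = lev (iter i par a) + i &
  lev b = lev (iter i par a) + j].
Proof.
elim: k a => [|k IH] a.
  by move=> /= /eqP ->; exists 0, 0; rewrite !addn0.
rewrite reachSE => /orP [H|/existsP [d /andP [Had Hd]]].
  by have [i [j [H1 H2 H3 H4]]] := IH _ H; exists i, j; split => //; lia.
have [i [j [H1 H2 H3 H4]]] := IH _ Hd.
case/orP: (factA Had) => /andP [Hu /eqP E].
- case: (par_spec Hu) => _ Hl.
  exists i.+1, j; rewrite iterSr -E; rewrite -E in Hl; split => //; lia.
- case: (par_spec Hu) => _ Hl.
  case: i H1 H2 H3 H4 => [|i] H1 H2 H3 H4.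
    exists 0, j.+1; rewrite iterS -H2 -E; rewrite -E in Hl; split => //=; try lia.
  exists i, j; move: H2 H3 H4; rewrite iterSr -E => H2 H3 H4; rewrite -E in Hl; split => //; lia.
Qed.


Variables (e : rel T) (v : T).
Hypothesis esym : symmetric e.
Hypothesis eirr : irreflexive e.
Hypothesis te : subrel t e.
Hypothesis tuv : t u v.
Hypothesis Hfc : forall x, reach t 2 x u || reach t 2 x v.

Lemma vu : v != u.
Proof. by apply/eqP => E; move: tuv; rewrite E tirr. Qed.

Lemma lev_v : lev v = 1.
Proof.
have : lev v <= 1 by rewrite lev_reach; apply: reach_edge; rewrite tsym.
have : lev v != 0 by rewrite lev0 vu.
lia.
Qed.

Lemma par_v : par v = u.
Proof. by apply/eqP; rewrite -lev0 lev_par lev_v. Qed.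

Lemma lev_le3 x : lev x <= 3.
Proof.
case/orP: (Hfc x) => H.
  by apply: leq_trans (_ : 2 <= 3) => //; rewrite lev_reach.
rewrite lev_reach; have := reach_cat H (reach_edge (r:=t) (a:=v) (b:=u) _).
by rewrite tsym => /(_ tuv).
Qed.

Lemma lev3 x : lev x = 3 -> par (par x) = v.
Proof.
move=> H3.
case/orP: (Hfc x) => H.
  by move: H; rewrite -lev_reach H3.
have [i [j [H1 H2 H4 H5]]] := walk H.
rewrite lev_v in H5.
have Hj : j = 0 by lia.
have Hi : i = 2 by lia.
by move: H2; rewrite Hi Hj.
Qed.

Lemma lev2 x : lev x <= 2 -> par (par x) = u.
Proof. by move=> H; apply/eqP; rewrite -lev0 !lev_par; lia. Qed.

Lemma levP1 x : lev x = 1 -> par x = u.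
Proof. by move=> H; apply/eqP; rewrite -lev0 !lev_par H. Qed.

Definition moved x := (1 < lev x) && (par x != v) && e (par (par x)) x.
Definition P x := if moved x then par (par x) else par x.
Definition t' x y := (y != u) && (x == P y) || (x != u) && (y == P x).

Lemma not_moved_par x : ~~ moved (par x).
Proof.
rewrite /moved lev_par.
have := lev_le3 x.
case: (ltnP 3 (lev x)) => [|H]; first lia.
case E : (lev x) => [|[|[|[|n]]]] //= _; last lia.
by rewrite lev3 // eqxx.
Qed.

Lemma P_par x : P (par x) = par (par x).
Proof. by rewrite /P (negbTE (not_moved_par x)). Qed.

Lemma P_u : P u = u.
Proof. by rewrite -{1}par_u P_par !par_u. Qed.

Lemma P_cases x : P x = par x \/ P x = par (par x).
Proof. by rewrite /P; case: (moved x); [right|left]. Qed.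

Lemma lev_P x : x != u -> lev (P x) < lev x.
Proof.
move=> Hx; have : lev x != 0 by rewrite lev0.
by case: (P_cases x) => ->; rewrite ?lev_par; lia.
Qed.

Lemma t'sym : symmetric t'.
Proof. by move=> x y; rewrite /t' orbC. Qed.

Lemma t'irr : irreflexive t'.
Proof.
move=> x; rewrite /t' orbb; apply/negP => /andP [Hx /eqP E].
by have := lev_P Hx; rewrite -E ltnn.
Qed.

Lemma t'P x : x != u -> t' x (P x).
Proof. by move=> Hx; rewrite /t' Hx eqxx orbT. Qed.

Lemma t'_parent x y : t' x y -> (x != u) && (y == P x) || (y != u) && (x == P y).
Proof. by rewrite /t' orbC. Qed.

Lemma eP x : x != u -> e x (P x).
Proof.
move=> Hx; rewrite /P; case E : (moved x).
  by move: E; rewrite /moved esym => /andP [].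
by apply: te; case: (par_spec Hx).
Qed.

Lemma t'e : subrel t' e.
Proof.
move=> x y /t'_parent /orP [] /andP [Hx /eqP ->]; first exact: eP.
by rewrite esym; apply: eP.
Qed.

Lemma reachP1 x : reach t' 1 x (P x).
Proof.
case: (eqVneq x u) => [->|Hx]; first by rewrite P_u reachS // reach0.
exact: reach_edge (t'P Hx).
Qed.

Lemma reach_par2 x : reach t' 2 x (par (par x)).
Proof.
case: (P_cases x) => E.
  have H1 := reachP1 x; rewrite E in H1.
  by have := reach_cat H1 (reachP1 (par x)); rewrite P_par.
by apply: reachS; rewrite -E reachP1.
Qed.

Lemma reach_par x : reach t' 2 x (par x).
Proof.
case: (P_cases x) => E.
  by apply: reachS; rewrite -E reachP1.
have H1 := reachP1 x; rewrite E -P_par in H1.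
by have := reach_cat H1 (reach_sym t'sym (reachP1 (par x))).
Qed.

Lemma conn_u x : connect t' x u.
Proof.
move: {2}(lev x) (leqnn (lev x)) => n; elim: n x => [|n IH] x Hx.
  by move: Hx; rewrite leqn0 lev0 => /eqP ->.
case: (eqVneq x u) => [->|Hxu] //.
apply: connect_trans (connect1 (t'P Hxu)) (IH _ _).
by have := lev_P Hxu; lia.
Qed.

Lemma t'conn a b : connect t' a b.
Proof.
apply: connect_trans (conn_u a) _.
by rewrite (sym_connect_sym t'sym); apply: conn_u.
Qed.

Lemma t'acyc (c : seq T) : ucycle t' c -> size c <= 2.
Proof. by apply: (acyc_parent (Q := P) (rk := lev) (root := u)); [apply: t'_parent | apply: lev_P]. Qed.

Lemma t'tree : is_spanning_tree e t'.
Proof. split; [by split; [apply: t'sym|apply: t'irr]|split; [apply: t'e|split; [apply: t'conn|apply: t'acyc]]]. Qed.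



Hypothesis Hsp : forall a b, dist t a b <= 3 * dist e a b.

Lemma meet_le a b i j : i <= j -> i + j <= 3 -> iter i par a = iter j par b ->
  lev a = lev (iter i par a) + i -> lev b = lev (iter i par a) + j ->
  reach t' 3 a b.
Proof.
move=> Hij Hs E Ha Hb.
case: i Hij Hs E Ha Hb => [|[|i]] Hij Hs E Ha Hb; last by lia.
- case: j Hij Hs E Ha Hb => [|[|[|[|j]]]] Hij Hs E Ha Hb; last lia.
  + by rewrite /= in E; rewrite E; exact: reach_mono (_ : 0 <= 3) (reach0 _ _).
  + rewrite /= in E; rewrite E; apply: reach_mono (_ : 2 <= 3) _ => //.
    exact: reach_sym t'sym (reach_par b).
  + rewrite /= in E; rewrite E; apply: reach_mono (_ : 2 <= 3) _ => //.
    exact: reach_sym t'sym (reach_par2 b).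
  + rewrite /= in E; rewrite E; apply: (reach_sym t'sym).
    by have := reach_cat (reach_par2 b) (reachP1 (par (par b))); rewrite P_par.
- case: j Hij Hs E Ha Hb => [|[|[|j]]] Hij Hs E Ha Hb; try lia.
  + rewrite /= in E.
    case Ma : (moved a).
      have H1 := reachP1 a; rewrite /P Ma E in H1.
      exact: reach_cat H1 (reach_sym t'sym (reach_par2 b)).
    case Mb : (moved b).
      have H1 := reachP1 b; rewrite /P Mb -E in H1.
      exact: reach_sym t'sym (reach_cat H1 (reach_sym t'sym (reach_par2 a))).
    have H1 := reachP1 a; rewrite /P Ma E in H1.
    have H2 := reachP1 b; rewrite /P Mb in H2.
    exact: reach_mono (_ : 2 <= 3) (reach_cat H1 (reach_sym t'sym H2)).
  + rewrite /= in E Ha Hb.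
    have Ma : moved a = false.
      rewrite /moved; case: (ltnP 1 (lev a)) => //= H.
      have Hb3 : lev b = 3 by have := lev_le3 b; lia.
      by rewrite E lev3 // eqxx.
    have H1 := reachP1 a; rewrite /P Ma E in H1.
    exact: reach_cat H1 (reach_sym t'sym (reach_par2 b)).
Qed.

Lemma meet_reach a b i j : i + j <= 3 -> iter i par a = iter j par b ->
  lev a = lev (iter i par a) + i -> lev b = lev (iter i par a) + j ->
  reach t' 3 a b.
Proof.
move=> Hs E Ha Hb; case: (leqP i j) => Hij; first exact: meet_le Hij Hs E Ha Hb.
apply: reach_sym t'sym _; apply: (meet_le (i := j) (j := i)); rewrite -?E //; lia.
Qed.

Lemma e_reach3 a b : e a b -> reach t' 3 a b.
Proof.
move=> Hab.
have H1 : dist e a b <= 1 by apply: dist_le; apply: reach_edge.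
have H3 : dist t a b <= 3 by apply: leq_trans (Hsp a b) _; lia.
rewrite dist_reach_iff // in H3.
have [i [j [Hs E Ha Hb]]] := walk H3.
exact: meet_reach Hs E Ha Hb.
Qed.

Lemma reach_e_t' k a b : reach e k a b -> reach t' (3 * k) a b.
Proof.
elim: k a => [|k IH] a; first by rewrite muln0.
rewrite reachSE => /orP [H|/existsP [d /andP [Had Hd]]].
  by apply: (reach_mono _ (IH _ H)); lia.
have := reach_cat (e_reach3 Had) (IH _ Hd).
by rewrite mulnS.
Qed.

Lemma t'spanner : tree_3_spanner e t'.
Proof.
split; first exact: t'tree.
move=> a b; apply: dist_le; apply: reach_e_t'; apply: dist_reach.
apply: connect_sub (tconn a b) => x y Hxy; apply: connect1; exact: te.
Qed.

Lemma P_v : P v = u.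
Proof. by rewrite /P /moved lev_v /= par_v. Qed.

Lemma t'five : five_center t' u v.
Proof.
split; first by rewrite /t' vu P_v eqxx.
move=> x; have := lev_le3 x; case: (ltnP 2 (lev x)) => H H3.
  by apply/orP; right; apply: dist_le; rewrite -(lev3 (x:=x)) ?reach_par2 //; lia.
by apply/orP; left; apply: dist_le; rewrite -(lev2 H) reach_par2.
Qed.

Lemma reach1_t' a b : reach t' 1 a b -> a = b \/ t' a b.
Proof.
rewrite reachSE => /orP [/eqP|/existsP [c /andP [H /eqP E]]]; first by left.
by right; rewrite -E.
Qed.

Lemma dist0 a b : dist t' a b = 0 -> a = b.
Proof. by move=> H; move: (dist_reach (t'conn a b)); rewrite H => /eqP. Qed.

Lemma cond2 w : e u w -> dist t' w u < dist t' w v -> t' u w.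
Proof.
move=> Huw Hd.
have wu : w != u by apply/eqP => E; move: Huw; rewrite E eirr.
suff : P w = u by move=> E; rewrite /t' wu E eqxx.
have : lev w != 0 by rewrite lev0.
have := lev_le3 w.
case E : (lev w) => [|[|[|[|n]]]] // _ _.
- by rewrite /P /moved E /= levP1.
- case: (eqVneq (par w) v) => Hpv.
    have Pw : P w = v by rewrite /P /moved Hpv eqxx andbF.
    have : dist t' w v <= 1 by apply: dist_le; rewrite -Pw reachP1.
    have : dist t' w u != 0 by apply/eqP => /dist0 E'; move: wu; rewrite E' eqxx.
    lia.
  by rewrite /P /moved E Hpv lev2 ?E // Huw.
- have Hv : dist t' w v <= 2 by apply: dist_le; rewrite -(lev3 E) reach_par2.
  have : dist t' w u <= 1 by lia.
  rewrite dist_reach_iff ?t'conn // => /reach1_t' [E'|].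
    by move: wu; rewrite E' eqxx.
  rewrite /t' eqxx /= wu /= => /eqP Pw.
  have : lev (P w) = 0 by rewrite -Pw lev_u.
  by case: (P_cases w) => ->; rewrite ?lev_par E.
Qed.

Lemma cond3 w : e v w -> dist t' w v < dist t' w u -> t' v w.
Proof.
move=> Hvw Hd.
have wv : w != v by apply/eqP => E; move: Hvw; rewrite E eirr.
case: (eqVneq w u) => [->|wu]; first by rewrite /t' vu P_v eqxx orbT.
have : lev w != 0 by rewrite lev0.
have := lev_le3 w.
case E : (lev w) => [|[|[|[|n]]]] // _ _.
- have Pw : P w = u by rewrite /P /moved E /= levP1.
  have : dist t' w u <= 1 by apply: dist_le; rewrite -Pw reachP1.
  have : dist t' w v != 0 by apply/eqP => /dist0 E'; move: wv; rewrite E' eqxx.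
  lia.
- case: (eqVneq (par w) v) => Hpv.
    have Pw : P w = v by rewrite /P /moved Hpv eqxx andbF.
    by rewrite /t' wu Pw eqxx.
  have Hu : dist t' w u <= 2 by apply: dist_le; rewrite -(lev2 (x:=w)) ?E // reach_par2.
  have : dist t' w v <= 1 by lia.
  rewrite dist_reach_iff ?t'conn // => /reach1_t' [E'|].
    by move: wv; rewrite E' eqxx.
  move=> H; exfalso; move: H; rewrite /t' P_v (negbTE wu) andbF /= => /eqP Pw.
  case: (P_cases w) => Ep; first by move: Hpv; rewrite -Ep -Pw eqxx.
  by move: vu; rewrite Pw Ep lev2 ?E // eqxx.
- have Hpv : par w != v.
    by apply/eqP => Ep; have := lev_par w; rewrite Ep lev_v E.
  have Pw : P w = v by rewrite /P /moved E Hpv lev3 // Hvw.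
  by rewrite /t' wu Pw eqxx.
Qed.

Lemma concentrated_t' : concentrated e t' u v.
Proof.
split; first exact: t'spanner.
split; first exact: t'five.
split; [exact: cond2 | exact: cond3].
Qed.

End Tree.

Unset Implicit Arguments.
Theorem lemma2 (T : finType) (e : rel T) (u v : T) :
  simple_graph e -> e u v ->
  (exists t : rel T, tree_3_spanner e t /\ five_center t u v) ->
  exists t : rel T, concentrated e t u v.
Proof.
move=> [esym eirr] _ [t [[[[tsym tirr] [te [tconn tacyc]]] Hsp] [tuv Hfc]]].
have Hfc' : forall x, reach t 2 x u || reach t 2 x v.
  by move=> x; rewrite -!dist_reach_iff.
eexists; exact: (concentrated_t' tsym tirr tconn tacyc esym eirr te tuv Hfc' Hsp).
Qed.
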